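(* Let $p$ be a prime and $n$ a natural number. Let $(A,+,\circ)$ be a left brace of cardinality $p^{n}$ whose additive group is elementary abelian (an $\mathbb F_p$-brace), and let $a\in A$, $a\ne0$, be such that $a^{\circ p}=a\circ a\circ\cdots\circ a$ ($p$ factors) equals $0$. Then there are at least $p^{n/p}$ elements $b\in A$ such that $a*b=0$.
   Context: A (left) brace is a set $A$ with operations $+,\circ$ such that $(A,+)$ is an abelian group, $(A,\circ)$ is a group, and $a\circ(b+c)+a=a\circ b+a\circ c$; the identity of $(A,\circ)$ is $0$, and $a*b=a\circ b-a-b$. *)

(* Defs.v *)
From Stdlib Require Import Reals.
From HB Require Import structures.
From mathcomp Require Import all_boot all_order all_algebra.
Set Implicit Arguments. Unset Strict Implicit. Unset Printing Implicit Defensive.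
Import GRing.Theory.
Local Open Scope ring_scope.

Record is_left_brace (A : zmodType) (circ : A -> A -> A) : Prop := {
  brace_assoc : forall x y z, circ x (circ y z) = circ (circ x y) z;
  brace_id_l : forall x, circ 0 x = x;
  brace_id_r : forall x, circ x 0 = x;
  brace_inv : forall x, exists y, circ x y = 0 /\ circ y x = 0;
  brace_compat : forall x y z, circ x (y + z) + x = circ x y + circ x z
}.

Definition brace_star (A : zmodType) (circ : A -> A -> A) (a b : A) : A :=
  circ a b - a - b.

Definition circ_pow (A : zmodType) (circ : A -> A -> A) (a : A) (k : nat) : A :=
  iter k (circ a) 0.

Definition elementary_abelian (A : zmodType) (p : nat) : Prop :=
  forall x : A, x *+ p = 0.

Definition real_pow_le (p n k : nat) : Prop :=
  Rle (Rpower (INR p) (Rdiv (INR n) (INR p))) (INR k).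

(* Main.v *)
Require Import Defs.
From Stdlib Require Import Reals Lra.
From HB Require Import structures.
From mathcomp Require Import all_boot all_order all_algebra.
Set Implicit Arguments. Unset Strict Implicit. Unset Printing Implicit Defensive.

Section RealPart.
Local Open Scope R_scope.

Lemma INR_expn m k : INR (m ^ k)%N = INR m ^ k.
Proof.
elim: k => [|k IH]; first by rewrite expn0.
by rewrite expnS -multE mult_INR IH.
Qed.

Lemma real_bound p n k : (1 < p)%N -> (p ^ n <= k ^ p)%N -> real_pow_le p n k.
Proof.
move=> hp hle.
have kpos : (0 < k)%N.
  case: k hle => // ; rewrite exp0n ?(ltnW hp) // leqn0 expn_eq0.
  by case: p hp.
rewrite /real_pow_le /Rpower.
have Hp : 0 < INR p by apply: lt_0_INR; apply/ltP; exact: ltnW.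
have Hk : 0 < INR k by apply: lt_0_INR; apply/ltP.
have H1 : INR n * ln (INR p) <= INR p * ln (INR k).
  rewrite -!ln_pow //.
  have hh : INR p ^ n <= INR k ^ p by rewrite -!INR_expn; apply: le_INR; apply/leP.
  case: (Rle_lt_or_eq_dec _ _ hh) => h.
    by apply: Rlt_le; apply: ln_increasing => //; apply: pow_lt.
  by rewrite h; apply: Rle_refl.
rewrite -[X in _ <= X](exp_ln _ Hk).
have H2 : INR n / INR p * ln (INR p) <= ln (INR k).
  apply (Rmult_le_reg_l (INR p)) => //.
  replace (INR p * (INR n / INR p * ln (INR p))) with (INR n * ln (INR p)) by (field; lra).
  exact H1.
case: (Rle_lt_or_eq_dec _ _ H2) => h.
  by apply: Rlt_le; apply: exp_increasing.
by rewrite h; apply: Rle_refl.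
Qed.
End RealPart.

Import GRing.Theory.
Local Open Scope ring_scope.

Section Gen.
Variable (V : zmodType) (L : V -> V).
Hypothesis LD : forall x y, L (x + y) = L x + L y.

Lemma L0 : L 0 = 0.
Proof. have h := LD 0 0; rewrite addr0 in h. by apply: (addrI (L 0)); rewrite addr0 -h. Qed.

Lemma LMn x m : L (x *+ m) = L x *+ m.
Proof. elim: m => [|m IH]; first by rewrite !mulr0n L0. by rewrite !mulrS LD IH. Qed.

Lemma LB x y : L (x - y) = L x - L y.
Proof. by apply: (addrI (L y)); rewrite -LD addrC subrK addrC subrK. Qed.

Lemma Lsum (I : Type) (r : seq I) (P : pred I) (F : I -> V) :
  L (\sum_(i <- r | P i) F i) = \sum_(i <- r | P i) L (F i).
Proof. exact: (big_morph L LD L0). Qed.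

Lemma iter_binom (q : nat) x k :
  iter k (fun y => L y + y *+ q) x =
  \sum_(0 <= i < k.+1) iter i L x *+ ('C(k, i) * q ^ (k - i)).
Proof.
elim: k => [|k IH].
  by rewrite big_nat1 /= mul1n expn0 mulr1n.
rewrite iterS IH Lsum.
rewrite (big_nat_recl _ _ _ (leq0n k.+1)) /=.
rewrite (eq_bigr (fun i => L (iter i L x) *+ ('C(k, i) * q ^ (k - i)))); last first.
  by move=> i _; rewrite LMn.
rewrite [X in _ = _ + X](eq_bigr (fun i => L (iter i L x) *+ ('C(k, i) * q ^ (k - i))
   + L (iter i L x) *+ ('C(k, i.+1) * q ^ (k - i)))); last first.
  by move=> i _; rewrite binS subSS mulnDl mulrnDr addrC.
rewrite big_split /= addrCA; congr (_ + _).
rewrite -sumrMnl.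
rewrite [in LHS](big_nat_recl _ _ _ (leq0n k)) /= bin0 subn0 mul1n -mulrnA -expnSr.
rewrite bin0 mul1n subn0; congr (_ + _).
rewrite (big_nat_recr _ _ _ (leq0n k)) /= bin_small // mul0n mulr0n addr0.
apply: eq_big_nat => i /andP[_ hi].
by rewrite -iterS -mulrnA -mulnA -expnSr subnSK.
Qed.
End Gen.

Section Brace.
Variables (A : zmodType) (circ : A -> A -> A) (p : nat) (a : A).
Hypotheses (Hb : is_left_brace circ) (pr : prime p)
  (EA : elementary_abelian A p) (Hap : circ_pow circ a p = 0).

Let L := fun y => circ a y - a.

Lemma LDb y z : L (y + z) = L y + L z.
Proof.
have h := brace_compat Hb a y z; rewrite /L.
rewrite addrACA -h -addrA; congr (_ + _); by rewrite addrA addrN add0r.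
Qed.

Lemma LBb u v : L (u - v) = L u - L v.
Proof. by apply: (addrI (L v)); rewrite -LDb addrC subrK addrC subrK. Qed.

Lemma iterL k x : iter k L x = circ (circ_pow circ a k) x - circ_pow circ a k.
Proof.
elim: k => [|k IH] /=; first by rewrite /circ_pow /= brace_id_l // subr0.
by rewrite IH LBb /L (brace_assoc Hb) opprB addrA subrK.
Qed.

Lemma negq (y : A) : y *+ p.-1 = - y.
Proof.
have h := EA y; rewrite -(prednK (prime_gt0 pr)) mulrSr in h.
by apply/eqP; rewrite -addr_eq0 h.
Qed.

Lemma powq (y : A) j : y *+ (p.-1 ^ j) = if odd j then - y else y.
Proof.
elim: j => [|j IH]; first by rewrite expn0 mulr1n.
rewrite expnS mulnC mulrnA IH /=; case: (odd j) => /=.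
  by rewrite mulNrn negq opprK.
by rewrite negq.
Qed.

Lemma Nnil (x : A) : iter p (brace_star circ a) x = 0.
Proof.
rewrite (@eq_iter _ _ (fun y => L y + y *+ p.-1)); last first.
  by move=> y; rewrite /brace_star negq.
rewrite (iter_binom LDb) (big_nat_recr _ _ _ (leq0n p)) /=.
rewrite (big_ltn (prime_gt0 pr)) /=.
rewrite big_nat_cond big1; last first.
  move=> i /andP[/andP[hi1 hi2] _].
  have /dvdnP[m hm] := prime_dvd_bin pr (introT andP (conj hi1 hi2)).
  by rewrite hm mulnAC mulrnA EA.
rewrite iterL Hap binn subnn expn0 muln1 mulr1n bin0 mul1n subn0 /=.
rewrite (brace_id_l Hb) subr0 addr0 powq.
case: (even_prime pr) => [p2|op].
  by move: (EA x); rewrite p2 /= mulr2n.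
by rewrite op addNr.
Qed.
End Brace.

Lemma count_fib (B : finZmodType) (f : B -> B)
  (fD : forall x y, f (x + y) = f x + f y) (S S' : {set B}) :
  (forall x, x \in S' -> f x \in S) ->
  (#|S'| <= #|[set x | f x == 0%R]| * #|S|)%N.
Proof.
move=> hS.
pose r y := odflt 0 [pick z | f z == y].
have hr x : f (r (f x)) = f x.
  rewrite /r; case: pickP => [z /eqP -> //| H].
  by move: (H x); rewrite eqxx.
pose g x := (x - r (f x), f x).
rewrite -cardsX -(@card_in_imset _ _ g (mem S')); last first.
  move=> x y _ _ [e1 e2]; rewrite e2 in e1; exact: (addIr _ e1).
apply: subset_leq_card; apply/subsetP => _ /imsetP[x hx ->].
by rewrite in_setX inE /= (LB fD) hr subrr eqxx hS.
Qed.

Theorem proposition3p5 (p n : nat) (A : finZmodType) (circ : A -> A -> A)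
  (a : A) :
  prime p ->
  #|A| = (p ^ n)%N ->
  elementary_abelian A p ->
  is_left_brace circ ->
  a != 0%R ->
  circ_pow circ a p = 0%R ->
  real_pow_le p n #|[set b : A | brace_star circ a b == 0%R]|.
Proof.
move=> pr hA EA Hb _ Hap.
pose N := brace_star circ a.
have ND x y : N (x + y) = N x + N y.
  by rewrite /N /brace_star (@LDb _ _ a Hb) opprD addrACA.
have bound k : (#|[set x : A | iter k N x == 0%R]| <= #|[set x | N x == 0%R]| ^ k)%N.
  elim: k => [|k IH].
    have -> : [set x : A | iter 0 N x == 0] = [set 0] by apply/setP => x; rewrite !inE.
    by rewrite cards1.
  apply: leq_trans (count_fib ND (S := [set x | iter k N x == 0]) _) _.
    by move=> x; rewrite !inE iterSr.
  by rewrite expnS leq_mul2l IH orbT.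
apply: real_bound; first exact: prime_gt1.
rewrite -hA -cardsT.
have <- : [set x : A | iter p N x == 0] = [set: A].
  by apply/setP => x; rewrite !inE /N (@Nnil _ _ _ _ Hb pr EA Hap) eqxx.
exact: bound.
Qed.
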